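(* Let $r$, $w$, and $t$ be positive integers with $t \geq r+w$. Let $t'$ be an integer with $0 \le t' \le t$ at which the function $x \mapsto \binom{x}{r}\binom{t-x}{w}$, defined on the integers $0 \le x \le t$, attains its maximum. If $d=\binom{t-r-w}{t'-r}$, then $$N((r,w;d),t)=bc_{d}(I_{t}(r,w))=bp_{d}(I_{t}(r,w))=\binom{t}{t'}.$$
   Context: Let $d,n,t,r,w$ be positive integers. A pair $(X,\mathcal B)$, where $X$ is a set of $n$ points and $\mathcal B=\{B_1,\ldots,B_t\}$ is a collection of $t$ subsets (blocks) of $X$, is an $(r,w;d)$-cover-free family with $t$ blocks if for any two sets of indices $L,M\subseteq\{1,\ldots,t\}$ with $L\cap M=\emptyset$, $|L|=r$, $|M|=w$, one has $\left|\left(\bigcap_{l\in L}B_l\right)\setminus\left(\bigcup_{m\in M}B_m\right)\right|\ge d$. $N((r,w;d),t)$ denotes the minimum number of points $|X|$ of an $(r,w;d)$-cover-free family having $t$ blocks. The bi-intersection graph $I_t(r,w)$ is the bipartite graph whose vertices are all $r$-subsets and all $w$-subsets of $\{1,\ldots,t\}$ (one part consisting of the $r$-subsets, the other of the $w$-subsets), where an $r$-subset is adjacent to a $w$-subset if and only if they are disjoint. A biclique of a graph $G$ is a complete bipartite subgraph of $G$. The $d$-biclique covering number $bc_d(G)$ (resp. $d$-biclique partition number $bp_d(G)$) is the minimum number of bicliques of $G$ such that every edge of $G$ belongs to at least $d$ (resp. exactly $d$) of these bicliques. Binomial coefficients $\binom{a}{b}$ are $0$ when $b<0$ or $b>a$.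 *)

(* Defs.v *)
From mathcomp Require Import all_boot.
Set Implicit Arguments. Unset Strict Implicit. Unset Printing Implicit Defensive.

Definition is_minimum (P : nat -> Prop) (m : nat) : Prop :=
  P m /\ (forall k, P k -> m <= k).

Definition is_cff (r w d t n : nat) (B : 'I_t -> {set 'I_n}) : Prop :=
  forall L M : {set 'I_t}, [disjoint L & M] -> #|L| = r -> #|M| = w ->
    d <= #|(\bigcap_(l in L) B l) :\: (\bigcup_(m in M) B m)|.

Definition N_cff (r w d t : nat) (n : nat) : Prop :=
  is_minimum (fun n' => exists B : 'I_t -> {set 'I_n'}, @is_cff r w d t n' B) n.

(* Bi-intersection graph I_t(r,w): left part = r-subsets of 'I_t,
   right part = w-subsets of 'I_t; edge (A,C) iff A, C disjoint. *)
Definition bi_edge (t r w : nat) (A C : {set 'I_t}) : bool :=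
  [&& #|A| == r, #|C| == w & [disjoint A & C]].

Definition is_biclique (t r w : nat) (S T : {set {set 'I_t}}) : Prop :=
  (forall A, A \in S -> #|A| = r) /\ (forall C, C \in T -> #|C| = w) /\
  (forall A C, A \in S -> C \in T -> [disjoint A & C]).

Definition edge_mult (t k : nat) (F : 'I_k -> {set {set 'I_t}} * {set {set 'I_t}})
  (A C : {set 'I_t}) : nat :=
  #|[set i : 'I_k | (A \in (F i).1) && (C \in (F i).2)]|.

Definition is_d_biclique_cover (t r w d k : nat)
  (F : 'I_k -> {set {set 'I_t}} * {set {set 'I_t}}) : Prop :=
  (forall i, @is_biclique t r w (F i).1 (F i).2) /\
  (forall A C, @bi_edge t r w A C -> d <= edge_mult F A C).

Definition is_d_biclique_partition (t r w d k : nat)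
  (F : 'I_k -> {set {set 'I_t}} * {set {set 'I_t}}) : Prop :=
  (forall i, @is_biclique t r w (F i).1 (F i).2) /\
  (forall A C, @bi_edge t r w A C -> edge_mult F A C = d).

Definition bc_d (t r w d : nat) (m : nat) : Prop :=
  is_minimum (fun k => exists F, @is_d_biclique_cover t r w d k F) m.

Definition bp_d (t r w d : nat) (m : nat) : Prop :=
  is_minimum (fun k => exists F, @is_d_biclique_partition t r w d k F) m.

(* binomial with the convention C(a,b) = 0 for b < 0: C(a, b - c) for integer b - c *)
Definition binom_sub (a b c : nat) : nat := if c <= b then 'C(a, b - c) else 0.

(* Main.v *)
Require Import Defs.
From mathcomp Require Import all_boot.
From mathcomp Require Import zify ring.
Set Implicit Arguments. Unset Strict Implicit. Unset Printing Implicit Defensive.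
Lemma binom_id a b c e : 'C(b+e,b) * 'C(a+b+c+e, a) * 'C(b+c+e, c) = 'C(a+b+c+e, a+b) * 'C(a+b, a) * 'C(c+e, c).
Proof.
have F (n m : nat) : 'C(m + n, m) * (m`! * n`!) = (m+n)`!.
  by rewrite -{2}(addnK m n) addnC bin_fact // leq_addl.
have h1 := F e b. have h2 := F (b+e) c. have h3 := F (b+c+e) a.
have h4 := F (c+e) (a+b). have h5 := F b a. have h6 := F e c.
have P : 0 < a`! * b`! * c`! * e`! by rewrite !muln_gt0 !fact_gt0.
apply/eqP; rewrite -(eqn_pmul2r P); apply/eqP.
have E1 : c + (b + e) = b + c + e by ring.
have E2 : a + (b + c + e) = a + b + c + e by ring.
have E3 : a + b + (c + e) = a + b + c + e by ring.
rewrite E1 in h2; rewrite E2 in h3; rewrite E3 in h4.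
transitivity (a + b + c + e)`!.
  rewrite -h3 -h2 -h1; ring.
rewrite -h4 -h5 -h6; ring.
Qed.
Lemma disjP (T : finType) (A B : {set T}) :
  reflect (forall x, x \in A -> x \in B -> False) [disjoint A & B].
Proof.
apply: (iffP idP) => [H x xA xB | H].
  by move: (disjointFr H xA); rewrite xB.
rewrite disjoint_subset; apply/subsetP => x xA; rewrite inE; apply/negP; exact: H.
Qed.

Lemma count_sup (T : finType) (r w t' : nat) (L M : {set T}) :
  [disjoint L & M] -> #|L| = r -> #|M| = w -> r <= t' ->
  #|[set S : {set T} | [&& #|S| == t', L \subset S & [disjoint M & S]]]|
  = 'C(#|T| - r - w, t' - r).
Proof.
move=> dLM cL cM rt.
set R := ~: (L :|: M).
have cR : #|R| = #|T| - r - w.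
  have := cardsC (L :|: M); rewrite cardsU.
  move: dLM; rewrite -setI_eq0 => /eqP ->; rewrite cards0 subn0 cL cM /R; lia.
rewrite -cR -cards_draws -[in RHS](@card_in_imset _ _ (fun X => X :|: L)).
  apply: eq_card => S; apply/idP/idP.
    rewrite inE => /andP[/eqP cS /andP[LS dMS]].
    apply/imsetP; exists (S :\: L); last first.
      apply/setP => x; rewrite !inE; case xL: (x \in L) => //=; last by rewrite orbF.
      by rewrite (subsetP LS x xL).
    rewrite inE cardsD (setIidPr LS) cS cL eqxx andbT.
    apply/subsetP => x; rewrite !inE => /andP[xL xS]; rewrite (negbTE xL) /=.
    by apply/negP => xM; move: dMS; rewrite disjoint_subset => /subsetP/(_ x xM); rewrite inE xS.
  case/imsetP => X; rewrite inE => /andP[XR /eqP cX] ->.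
  have dXL : [disjoint X & L].
    rewrite disjoint_subset; apply: subset_trans XR _; apply/subsetP => x; rewrite !inE negb_or; by case/andP.
  rewrite inE subsetUr cardsU.
  move: (dXL); rewrite -setI_eq0 => /eqP ->; rewrite cards0 subn0 cX cL subnK // eqxx /=.
  apply/disjP => x xM; rewrite inE => /orP[xX|xL]; last exact: (disjP _ _ dLM x xL xM).
  by move/subsetP: XR => /(_ x xX); rewrite !inE xM orbT.
move=> X Y; rewrite !inE => /andP[XR _] /andP[YR _] E.
have dis (Z : {set T}) : Z \subset R -> (Z :|: L) :\: L = Z.
  move=> ZR; apply/setP => x; rewrite !inE.
  case xZ: (x \in Z); case xL: (x \in L) => //=.
  by move/subsetP: ZR => /(_ x); rewrite xZ !inE xL => /(_ isT).
by have := congr1 (fun Z => Z :\: L) E; rewrite /= (dis X XR) (dis Y YR).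
Qed.
Lemma biclique_bound t r w m (S T : {set {set 'I_t}}) :
  (forall x, x <= t -> 'C(x, r) * 'C(t - x, w) <= m) ->
  @is_biclique t r w S T -> #|S| * #|T| <= m.
Proof.
move=> Hm [HS [HT HST]].
set U := \bigcup_(A in S) A; set V := \bigcup_(C in T) C.
have cS : #|S| <= 'C(#|U|, r).
  rewrite -cards_draws; apply: subset_leq_card; apply/subsetP => A AS.
  rewrite inE HS // eqxx andbT; exact: bigcup_sup.
have cT : #|T| <= 'C(#|V|, w).
  rewrite -cards_draws; apply: subset_leq_card; apply/subsetP => C CT.
  rewrite inE HT // eqxx andbT; exact: bigcup_sup.
have VU : V \subset ~: U.
  apply/subsetP => x /bigcupP [C CT xC]; rewrite inE; apply/negP => /bigcupP [A AS xA].
  by move: (disjointFr (HST A C AS CT) xA); rewrite xC.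
have cV : #|V| <= t - #|U|.
  have := cardsC U; rewrite card_ord => E.
  have := subset_leq_card VU; lia.
have cU : #|U| <= t by rewrite -[t in _ <= t]card_ord max_card.
apply: leq_trans (Hm _ cU); apply: leq_mul => //.
by apply: leq_trans cT _; apply: leq_bin2l.
Qed.
Lemma sum_in (T : finType) (S : {set T}) : \sum_x (x \in S : nat) = #|S|.
Proof. by rewrite -sum1_card [RHS]big_mkcond; apply: eq_bigr => x _; case: (x \in S). Qed.

Lemma card_sum (T : finType) (p : pred T) : #|[set x | p x]| = \sum_x (p x : nat).
Proof. by rewrite -sum1dep_card [LHS]big_mkcond; apply: eq_bigr => x _; case: (p x). Qed.

Lemma row_count t r w (A : {set 'I_t}) :
  \sum_(C : {set 'I_t}) ([&& #|A| == r, #|C| == w & [disjoint A & C]] : nat)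
  = (#|A| == r) * 'C(t - r, w).
Proof.
case: eqP => [cA | _]; last by rewrite mul0n big1.
rewrite mul1n -card_sum.
have cC : #|~: A| = t - r by have := cardsC A; rewrite card_ord cA; lia.
rewrite -cC -cards_draws; apply: eq_card => C; rewrite !inE disjoint_sym disjoints_subset /=.
by rewrite andbC.
Qed.

Lemma edge_count t r w :
  \sum_(A : {set 'I_t}) \sum_(C : {set 'I_t}) ([&& #|A| == r, #|C| == w & [disjoint A & C]] : nat)
  = 'C(t, r) * 'C(t - r, w).
Proof.
under eq_bigr => A _ do rewrite row_count.
by rewrite -big_distrl /= -card_sum card_draws card_ord.
Qed.

Lemma cover_lb t r w d k F m :
  (forall x, x <= t -> 'C(x, r) * 'C(t - x, w) <= m) ->
  @is_d_biclique_cover t r w d k F -> d * ('C(t, r) * 'C(t - r, w)) <= k * m.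
Proof.
move=> Hm [Hb Hc].
rewrite -edge_count big_distrr /=.
apply: (@leq_trans (\sum_(A : {set 'I_t}) \sum_(C : {set 'I_t}) edge_mult F A C)).
  apply: leq_sum => A _; rewrite big_distrr; apply: leq_sum => C _.
  case E: [&& _, _ & _] => /=; last by rewrite muln0.
  by rewrite muln1; exact: Hc A C E.
have -> : \sum_(A : {set 'I_t}) \sum_(C : {set 'I_t}) edge_mult F A C
          = \sum_(i < k) #|(F i).1| * #|(F i).2|.
  under eq_bigr => A _ do under eq_bigr => C _ do rewrite /edge_mult card_sum.
  under eq_bigr => A _ do rewrite exchange_big.
  rewrite exchange_big; apply: eq_bigr => i _.
  rewrite -!sum_in big_distrl; apply: eq_bigr => A _.
  rewrite big_distrr; apply: eq_bigr => C _ /=.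
  by case: (A \in _); case: (C \in _).
rewrite -[k in k * m]card_ord -sum_nat_const; apply: leq_sum => i _.
exact: biclique_bound Hm (Hb i).
Qed.

Definition fam t r w k (S : 'I_k -> {set 'I_t}) (x : 'I_k) :=
  ([set A : {set 'I_t} | (#|A| == r) && (A \subset S x)],
   [set C : {set 'I_t} | (#|C| == w) && [disjoint C & S x]]).

Lemma fam_biclique t r w k (S : 'I_k -> {set 'I_t}) x :
  @is_biclique t r w (fam r w S x).1 (fam r w S x).2.
Proof.
split; [|split].
- by move=> A; rewrite inE => /andP[/eqP].
- by move=> C; rewrite inE => /andP[/eqP].
move=> A C; rewrite !inE => /andP[_ AS] /andP[_ CS].
apply/disjP => y yA yC.
by move: (disjointFr CS yC); rewrite (subsetP AS y yA).
Qed.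

Lemma fam_mult t r w k (S : 'I_k -> {set 'I_t}) (A C : {set 'I_t}) :
  #|A| = r -> #|C| = w ->
  edge_mult (fam r w S) A C = #|[set x | (A \subset S x) && [disjoint C & S x]]|.
Proof.
move=> cA cC; apply: eq_card => x; by rewrite !inE cA cC !eqxx.
Qed.

Definition SB t n (B : 'I_t -> {set 'I_n}) (x : 'I_n) := [set i | x \in B i].

Lemma cff_mult t n (B : 'I_t -> {set 'I_n}) (L M : {set 'I_t}) :
  #|(\bigcap_(l in L) B l) :\: (\bigcup_(m in M) B m)|
  = #|[set x | (L \subset SB B x) && [disjoint M & SB B x]]|.
Proof.
apply: eq_card => x; rewrite !inE.
rewrite andbC; congr andb.
  apply/bigcapP/subsetP => [H l lL | H l lL]; last by move: (H l lL); rewrite inE.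
  by rewrite inE; apply: H.
apply/negP/disjP => [H m mM | H /bigcupP [m mM xm]].
  by rewrite inE => xm; apply: H; apply/bigcupP; exists m.
by apply: (H m mM); rewrite inE.
Qed.

Lemma cff_cover r w d t n (B : 'I_t -> {set 'I_n}) :
  @is_cff r w d t n B -> @is_d_biclique_cover t r w d n (fam r w (SB B)).
Proof.
move=> H; split; first by move=> i; apply: fam_biclique.
move=> A C /and3P [/eqP cA /eqP cC dAC].
by rewrite fam_mult // -cff_mult; apply: H.
Qed.

Lemma enum_count (T : finType) (D : {set T}) (P : pred T) :
  #|[set x : 'I_#|D| | P (enum_val x)]| = #|[set y in D | P y]|.
Proof.
rewrite -(card_imset _ enum_val_inj); apply: eq_card => y.
apply/imsetP/idP => [[x] | ].
  by move=> + ->; rewrite !inE enum_valP.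
rewrite inE => /andP [yD Py]; exists (enum_rank_in yD y); last by rewrite enum_rankK_in.
by rewrite inE enum_rankK_in.
Qed.

Theorem theorem1 (r w t t' : nat) :
  0 < r -> 0 < w -> 0 < t -> r + w <= t ->
  t' <= t ->
  (forall x, x <= t -> 'C(x, r) * 'C(t - x, w) <= 'C(t', r) * 'C(t - t', w)) ->
  let d := binom_sub (t - r - w) t' r in
  N_cff r w d t 'C(t, t') /\ bc_d t r w d 'C(t, t') /\ bp_d t r w d 'C(t, t').
Proof.
move=> r0 w0 t0 rwt t't Hm d.
set mx := 'C(t', r) * 'C(t - t', w).
have mx0 : 0 < mx.
  apply: leq_trans (Hm r _); last lia.
  by rewrite binn mul1n bin_gt0; lia.
have rt' : r <= t' by move: mx0; rewrite /mx muln_gt0 !bin_gt0 => /andP[].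
have wt' : w <= t - t' by move: mx0; rewrite /mx muln_gt0 !bin_gt0 => /andP[].
have dE : d = 'C(t - r - w, t' - r) by rewrite /d /binom_sub rt'.
have key : d * ('C(t, r) * 'C(t - r, w)) = 'C(t, t') * mx.
  have := binom_id r (t' - r) w (t - t' - w).
  have E1 : t' - r + (t - t' - w) = t - r - w by lia.
  have E2 : r + (t' - r) + w + (t - t' - w) = t by lia.
  have E3 : t' - r + w + (t - t' - w) = t - r by lia.
  have E4 : r + (t' - r) = t' by lia.
  have E5 : w + (t - t' - w) = t - t' by lia.
  rewrite E1 E2 E3 E4 E5 dE /mx mulnA => ->; by rewrite mulnA.
have LB : forall k F, @is_d_biclique_cover t r w d k F -> 'C(t, t') <= k.
  move=> k F HF; have := cover_lb Hm HF; rewrite key -/mx leq_pmul2r //.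
set D := [set S : {set 'I_t} | #|S| == t'].
have HD : #|D| = 'C(t, t') by rewrite card_draws card_ord.
have cnt : forall L M : {set 'I_t}, [disjoint L & M] -> #|L| = r -> #|M| = w ->
    #|[set x : 'I_#|D| | (L \subset enum_val x) && [disjoint M & enum_val x]]| = d.
  move=> L M dLM cL cM.
  rewrite (enum_count D (fun S => (L \subset S) && [disjoint M & S])).
  rewrite dE -[t in 'C(t - r - w, _)]card_ord -(count_sup dLM cL cM rt').
  by apply: eq_card => S; rewrite !inE.
pose F := fam r w (fun x : 'I_#|D| => enum_val x).
have Fpart : @is_d_biclique_partition t r w d #|D| F.
  split; first by move=> i; apply: fam_biclique.
  move=> A C /and3P [/eqP cA /eqP cC dAC].
  by rewrite fam_mult // cnt.
have Fcov : @is_d_biclique_cover t r w d #|D| F.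
  by split; [exact: Fpart.1 | move=> A C H; rewrite Fpart.2].
split; last split.
- split.
    rewrite -HD; exists (fun i => [set x : 'I_#|D| | i \in enum_val x]).
    move=> L M dLM cL cM; rewrite cff_mult -(cnt L M dLM cL cM).
    apply: eq_leq; apply: eq_card => x; rewrite !inE.
    have -> : SB (fun i => [set x0 : 'I_#|D| | i \in enum_val x0]) x = enum_val x.
      by apply/setP => i; rewrite !inE.
    by [].
  move=> k [B HB]; exact: LB (cff_cover HB).
- split; first by rewrite -HD; exists F.
  by move=> k [F' HF']; exact: LB HF'.
- split; first by rewrite -HD; exists F.
  move=> k [F' [H1 H2]]; apply: (LB k F'); split => // A C H; by rewrite H2.
Qed.
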